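(* Let $p$ be an odd prime and let $k$ be an integer with $2\le k\le p-1$. Let $T$ be an orthogonal trade in $B_p$ of index $(1,k)$, let $s$ be a symbol occurring in $T$, and let $R\subseteq\mathbb{Z}_p$ be the set of rows $r$ such that $T$ contains a triple $(r,c,s)$ for some $c$. Then there exist a permutation $\phi$ of $R$ with no fixed points such that $U=\{(r,c,r+c): r\in R,\ c\in\mathbb{Z}_p\}$ is an orthogonal trade in $B_p$ of index $(1,k)$ with disjoint mate $U'=\{(r,c,\phi(r)+c): r\in R,\ c\in\mathbb{Z}_p\}$ (i.e. obtained by permuting the rows of $B_p$ indexed by $R$); in particular this trade has size $p|R|$.
   Context: All arithmetic is modulo $p$. A Latin square of order $p$ is viewed as a set of (row, column, symbol) triples in $\mathbb{Z}_p^3$. For $1\le k\le p-1$, $B_p(k)$ is the Latin square with symbol $ki+j$ in cell $(i,j)$, $i,j\in\mathbb{Z}_p$; $B_p=B_p(1)$. A Latin trade in a Latin square $L$ is a subset $T\subseteq L$ for which there is a partial Latin square $T'$ (a disjoint mate) such that $T$ and $T'$ occupy the same set of cells, $T\cap T'=\emptyset$, and each row (respectively column) of $T$ contains the same set of symbols as the corresponding row (column) of $T'$. Two Latin squares of order $p$ are orthogonal if superimposing them yields each of the $p^2$ ordered pairs exactly once. An orthogonal trade of index $(\ell,k)$ is a Latin trade $T\subseteq B_p(\ell)$ having a disjoint mate $T'$ such that $(B_p(\ell)\setminus T)\cup T'$ is orthogonal to $B_p(k)$. *)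

(* Defs.v *)
From HB Require Import structures.
From mathcomp Require Import all_boot all_order all_algebra all_fingroup.
Set Implicit Arguments. Unset Strict Implicit. Unset Printing Implicit Defensive.
Import GRing.Theory.
Local Open Scope ring_scope.

(* A triple ((row, column), symbol) in Z_p^3. *)
Definition triple (p : nat) := ('Z_p * 'Z_p * 'Z_p)%type.

Definition Bsq (p k : nat) : {set triple p} :=
  [set x : triple p | x.2 == (k%:R : 'Z_p) * x.1.1 + x.1.2].

Definition partial_latin (p : nat) (P : {set triple p}) : Prop :=
  forall x y, x \in P -> y \in P ->
    [/\ x.1 = y.1 -> x = y,
        x.1.1 = y.1.1 -> x.2 = y.2 -> x = y &
        x.1.2 = y.1.2 -> x.2 = y.2 -> x = y].

Definition cells (p : nat) (P : {set triple p}) : {set 'Z_p * 'Z_p} :=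
  [set x.1 | x in P].
Definition row_syms (p : nat) (P : {set triple p}) (r : 'Z_p) : {set 'Z_p} :=
  [set x.2 | x in P & x.1.1 == r].
Definition col_syms (p : nat) (P : {set triple p}) (c : 'Z_p) : {set 'Z_p} :=
  [set x.2 | x in P & x.1.2 == c].

Definition disjoint_mate (p : nat) (T T' : {set triple p}) : Prop :=
  [/\ partial_latin T',
      cells T' = cells T,
      T :&: T' = set0,
      forall r, row_syms T' r = row_syms T r &
      forall c, col_syms T' c = col_syms T c].

Definition latin_trade (p : nat) (L T : {set triple p}) : Prop :=
  T \subset L /\ exists T', disjoint_mate T T'.

Definition latin_orthogonal (p : nat) (L1 L2 : {set triple p}) : Prop :=
  forall a b : 'Z_p,
    #|[set rc : 'Z_p * 'Z_p | ((rc, a) \in L1) && ((rc, b) \in L2)]| = 1%N.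

Definition orth_trade (p l k : nat) (T : {set triple p}) : Prop :=
  T \subset Bsq p l /\
  exists T', disjoint_mate T T' /\
             latin_orthogonal ((Bsq p l :\: T) :|: T') (Bsq p k).

(* Main.v *)
Require Import Defs.
From HB Require Import structures.
From mathcomp Require Import all_boot all_order all_algebra all_fingroup.
From mathcomp Require Import ring.
Import GRing.Theory.
Local Open Scope ring_scope.

Section Helpers.
Variable p : nat.
Variable R : {set 'Z_p}.
Variable g : 'Z_p -> 'Z_p.
Let G := [set x : triple p | (x.1.1 \in R) && (x.2 == g x.1.1 + x.1.2)].

Lemma cellsG : cells G = [set rc | rc.1 \in R].
Proof.
apply/setP => [[r c]]; rewrite inE; apply/imsetP/idP.
  by move=> [[[r' c'] y]]; rewrite inE /= => /andP [H _] [-> _].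
move=> Hr; exists ((r, c), g r + c) => //.
by rewrite inE /= Hr eqxx.
Qed.

Lemma rowsG r : row_syms G r = if r \in R then setT else set0.
Proof.
apply/setP => y; case: ifP => Hr; rewrite !inE.
  apply/imsetP; exists ((r, y - g r), y) => //.
  by rewrite !inE /= Hr eqxx andbT /=; apply/eqP; ring.
apply/imsetP => [[[[r' c] y']]]; rewrite !inE /= => /andP [/andP [H _] /eqP E] _.
by subst r'; rewrite H in Hr.
Qed.

Lemma colsG c : col_syms G c = [set g r + c | r in R].
Proof.
apply/setP => y; apply/imsetP/imsetP.
  move=> [[[r c'] y']]; rewrite !inE /= => /andP [/andP [Hr /eqP E] /eqP Ec] ->.
  by subst; exists r.
move=> [r Hr ->]; exists ((r, c), g r + c) => //.
by rewrite !inE /= Hr !eqxx.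
Qed.
End Helpers.

Theorem theorem4p1 (p k : nat) (T : {set triple p}) (s : 'Z_p) :
  prime p -> odd p -> (2 <= k <= p.-1)%N ->
  orth_trade 1 k T ->
  (exists rc : 'Z_p * 'Z_p, (rc, s) \in T) ->
  let R := [set r : 'Z_p | [exists c : 'Z_p, ((r, c), s) \in T]] in
  exists phi : {perm 'Z_p},
    [/\ perm_on R phi,
        (forall r, r \in R -> phi r != r) &
    let U := [set x : triple p | (x.1.1 \in R) && (x.2 == x.1.1 + x.1.2)] in
    let U' := [set x : triple p | (x.1.1 \in R) && (x.2 == phi x.1.1 + x.1.2)] in
    [/\ U \subset Bsq p 1,
        disjoint_mate U U',
        latin_orthogonal ((Bsq p 1 :\: U) :|: U') (Bsq p k) &
        #|U| = (p * #|R|)%N]].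
Proof.
move=> pp _ _ [TB [T' [[plT' cellsT' capT rowT colT] ortT]]] _ R.
have inB : forall r c y, (((r, c), y) \in Bsq p 1) = (y == r + c).
  by move=> r c y; rewrite inE /= mul1r.
have TB' : forall r c y, ((r, c), y) \in T -> y = r + c.
  by move=> r c y /(subsetP TB); rewrite inB => /eqP.
have hR' : forall r c, ((r, c), s) \in T' -> r \in R.
  move=> r c H.
  have : s \in row_syms T' r by apply/imsetP; exists ((r, c), s); rewrite // inE H /=.
  rewrite rowT => /imsetP [[[r1 c1] y] H1 /= E]; subst y.
  rewrite inE /= in H1; case/andP: H1 => H1 /eqP E; subst r1.
  by rewrite inE; apply/existsP; exists c1.
have hR : forall r, r \in R -> exists c, ((r, c), s) \in T'.
  move=> r; rewrite inE => /existsP [c H].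
  have : s \in row_syms T r by apply/imsetP; exists ((r, c), s); rewrite // inE H /=.
  rewrite -rowT => /imsetP [[[r1 c1] y] H1 /= E]; subst y.
  rewrite inE /= in H1; case/andP: H1 => H1 /eqP E; subst r1.
  by exists c1.
pose sig r := if [pick c | ((r, c), s) \in T'] is Some c then s - c else r.
have sig_out : forall r, r \notin R -> sig r = r.
  move=> r Hr; rewrite /sig; case: pickP => [c Hc|//].
  by rewrite (hR' _ _ Hc) in Hr.
have sig_fix : forall r, r \in R -> sig r != r.
  move=> r Hr; rewrite /sig; case: pickP => [c Hc|Hn].
    apply/eqP => E.
    move: Hr; rewrite inE => /existsP [c' Hc'].
    have E' := TB' _ _ _ Hc'.
    have Ec : c = c'.
      have -> : c = s - r by rewrite -E; ring.
      by rewrite E'; ring.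
    subst c'.
    by move/setP: capT => /(_ ((r, c), s)); rewrite !inE Hc Hc'.
  by case: (hR _ Hr) => c Hc; rewrite Hn in Hc.
pose L' := (Bsq p 1 :\: T) :|: T'.
have sigL : forall r, ((r, s - sig r), s) \in L'.
  move=> r; rewrite /sig; case: pickP => [c Hc|Hn].
    have -> : s - (s - c) = c by ring.
    by rewrite !inE Hc orbT.
  have Hr : r \notin R.
    by apply/negP => /hR [c Hc]; rewrite Hn in Hc.
  rewrite !inE /= mul1r; apply/orP; left; apply/andP; split.
    apply/negP => H; move: Hr; rewrite inE => /existsP; apply; by exists (s - r).
  by apply/eqP; ring.
have colT'T : forall r c, ((r, c), s) \in T' -> s - c \in R.
  move=> r c Hc.
  have : s \in col_syms T' c by apply/imsetP; exists ((r, c), s); rewrite // inE Hc /=.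
  rewrite colT => /imsetP [[[r1 c1] y] H1 /= E]; subst y.
  rewrite inE /= in H1; case/andP: H1 => H1 /eqP E; subst c1.
  have -> : s - c = r1 by rewrite (TB' _ _ _ H1); ring.
  by rewrite inE; apply/existsP; exists c.
have sig_inj : injective sig.
  have key : forall r1 r2 c, ((r1, c), s) \in T' ->
      (forall c, ((r2, c), s) \in T' = false) -> s - c <> r2.
    move=> r1 r2 c H1 Hn E.
    have := colT'T _ _ H1; rewrite E => /hR [c2 Hc2].
    by rewrite Hn in Hc2.
  move=> r1 r2; rewrite /sig; case: pickP => [c1 H1|N1]; case: pickP => [c2 H2|N2].
  - move=> E; have Ec : c1 = c2 by rewrite -[c1](subKr s) E subKr.
    subst c2; have [_ _ /(_ erefl erefl)] := plT' _ _ H1 H2.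
    by case.
  - by move/(key _ _ _ H1 N2).
  - by move/esym/(key _ _ _ H2 N1).
  - by [].
pose f r := k%:R * r - sig r.
have f_inj : injective f.
  move=> r1 r2 E.
  pose b := k%:R * r1 + (s - sig r1).
  have Eb : k%:R * r2 + (s - sig r2) = b.
    have : b - (k%:R * r2 + (s - sig r2)) = f r1 - f r2 by rewrite /b /f; ring.
    by rewrite E subrr => /eqP; rewrite subr_eq0 => /eqP ->.
  move: (ortT s b) => /eqP /cards1P [x Hx].
  have M1 : (r1, s - sig r1) \in [set x].
    by rewrite -Hx inE sigL /= inE /= eqxx.
  have M2 : (r2, s - sig r2) \in [set x].
    by rewrite -Hx inE sigL /= inE /= Eb eqxx.
  by rewrite !inE in M1 M2; move: M1 M2 => /eqP <- /eqP [].
pose phi := perm sig_inj.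
exists phi.
have phiE : forall r, phi r = sig r by move=> r; rewrite permE.
have pon : perm_on R phi.
  apply/subsetP => r; rewrite inE phiE; apply: contraR => Hr.
  by rewrite sig_out.
split => //.
  by move=> r Hr; rewrite phiE sig_fix.
move=> U U'.
have cU : cells U = [set rc | rc.1 \in R] := @cellsG p R id.
have cU' : cells U' = [set rc | rc.1 \in R] := @cellsG p R phi.
have rU : forall r, row_syms U r = if r \in R then setT else set0 := @rowsG p R id.
have rU' : forall r, row_syms U' r = if r \in R then setT else set0 := @rowsG p R phi.
have kU : forall c, col_syms U c = [set id r + c | r in R] := @colsG p R id.
have kU' : forall c, col_syms U' c = [set phi r + c | r in R] := @colsG p R phi.
have inL : forall x : triple p, (x \in (Bsq p 1 :\: U) :|: U') = (x.2 == phi x.1.1 + x.1.2).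
  move=> [[r c] y].
  have HrE : [exists c0, ((r, c0), s) \in T] = (r \in R) by rewrite inE.
  rewrite !inE /= mul1r HrE; case: (boolP (r \in R)) => Hr /=.
    by rewrite andNb.
  by rewrite orbF phiE sig_out.
split.
- by apply/subsetP => [[[r c] y]]; rewrite !inE /= mul1r => /andP [_ ->].
- split.
  + move=> [[r1 c1] y1] [[r2 c2] y2]; rewrite !inE /= => /andP [_ /eqP E1] /andP [_ /eqP E2].
    subst y1 y2; split => /=.
    * by case => -> ->.
    * by move=> Er; subst r2 => /addrI ->.
    * by move=> Ec; subst c2 => /addIr /perm_inj ->.
  + by rewrite cU cU'.
  + apply/setP => [[[r c] y]]; rewrite !inE /=; apply/negP.
    move=> /andP [/andP [Hr /eqP E1] /andP [_ /eqP E2]].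
    rewrite E1 in E2; move/addIr: E2 => E2.
    have Hr' : r \in R by rewrite inE.
    by move: (sig_fix _ Hr'); rewrite -phiE -E2 eqxx.
  + by move=> r; rewrite rU rU'.
  + move=> c; rewrite kU kU'; apply/setP => y; apply/imsetP/imsetP.
      move=> [r Hr ->]; exists (phi r) => //; by rewrite (perm_closed _ pon).
    move=> [r Hr ->]; exists ((phi^-1)%g r); last by rewrite permKV.
    by rewrite -(perm_closed _ pon) permKV.
- move=> a b.
  have [h fK hK] := injF_bij f_inj.
  have [r0 H] : exists r0, f r0 = b - a by exists (h (b - a)); exact: hK.
  rewrite /f -phiE in H.
  apply/eqP/cards1P; exists (r0, a - phi r0); apply/setP => [[r c]].
  rewrite in_set1 in_set inL inE /=; apply/andP/eqP.
    move=> [/eqP Ea /eqP Eb].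
    have Er : f r = f r0.
      by rewrite /f -!phiE H Ea Eb; ring.
    move/f_inj: Er => Er; subst r0.
    by rewrite Ea; congr pair; ring.
  case=> -> ->; split; apply/eqP; first by ring.
  have -> : b = (k%:R * r0 - phi r0) + a by rewrite H subrK.
  ring.
- have -> : U = [set (rc, rc.1 + rc.2) | rc in setX R setT].
    apply/setP => [[[r c] y]]; rewrite !inE /=; apply/idP/imsetP.
      by move=> /andP [Hr /eqP ->]; exists (r, c); rewrite // !inE Hr.
    by move=> [[r' c']]; rewrite !inE /= andbT => Hr [-> -> ->]; rewrite Hr eqxx.
  rewrite card_imset; last by move=> x1 x2 [].
  rewrite cardsX cardsT card_ord mulnC.
  exact: (congr1 (muln^~ #|R|) (Zp_cast (prime_gt1 pp))).
Qed.
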